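(* Let $p\ne q$ be primes, $G=\mathbb{Z}_p^2\times\mathbb{Z}_q^2$, and $S\subseteq G$. Assume that for every nonzero $u\in\mathbb{Z}_p^2$ there is $x_u\in\mathbb{Z}_q^2$ with $\chi_{u+x_u}(S)=0$. Then there exist a nonnegative integer $c$ and a multiset $D\colon\mathbb{Z}_p^2\to\mathbb{N}$ such that $S_p=c\,1_{\mathbb{Z}_p^2}+qD$.
   Context: Elements of $G$ are written $a+b$ with $a\in\mathbb{Z}_p^2$, $b\in\mathbb{Z}_q^2$. For $w=u+v$ define $\chi_w(a+b)=\exp\big(2\pi i(\tfrac{u\cdot a}{p}+\tfrac{v\cdot b}{q})\big)$ and $\chi(S)=\sum_{s\in S}\chi(s)$. $S_p$ is the projection of $S$ to $\mathbb{Z}_p^2$ as a multiset: $S_p(a)=\#\{b\in\mathbb{Z}_q^2:a+b\in S\}$. *)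

(* Defs.v *)
From mathcomp Require Import all_boot all_algebra complex.
From mathcomp Require Import all_classical all_reals all_analysis.
Set Implicit Arguments. Unset Strict Implicit. Unset Printing Implicit Defensive.
Import GRing.Theory Num.Theory.
Local Open Scope ring_scope.

(* Z_n^2 (n prime in our use, so 'Z_n = 'I_n) *)
Definition Z2 (n : nat) := ('Z_n * 'Z_n)%type.

Definition dot2 (n : nat) (u a : Z2 n) : nat :=
  (nat_of_ord u.1 * nat_of_ord a.1 + nat_of_ord u.2 * nat_of_ord a.2)%N.

(* G = Z_p^2 x Z_q^2 ; an element a + b is the pair (a, b) *)
Definition G (p q : nat) := (Z2 p * Z2 q)%type.

Definition expi (R : realType) (t : R) : R[i] := (cos t +i* sin t)%C.

Definition chi (R : realType) (p q : nat) (w s : G p q) : R[i] :=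
  expi (2 * pi * ((dot2 w.1 s.1)%:R / p%:R + (dot2 w.2 s.2)%:R / q%:R)).

Definition chiS (R : realType) (p q : nat) (w : G p q) (S : {set G p q}) : R[i] :=
  \sum_(s in S) chi R w s.

Definition Sp (p q : nat) (S : {set G p q}) (a : Z2 p) : nat :=
  #|[set b : Z2 q | (a, b) \in S]|.

(* Main.v *)
Require Import Defs.
From mathcomp Require Import all_boot all_algebra complex.
From mathcomp Require Import all_classical all_reals all_analysis.
From mathcomp Require Import algC cyclotomic.
From mathcomp Require Import ring lra zify.
Set Implicit Arguments. Unset Strict Implicit. Unset Printing Implicit Defensive.
Import GRing.Theory Num.Theory.
Local Open Scope ring_scope.
Lemma prod_Phi_seq (n : nat) (Ds : seq nat) : (0 < n)%N -> uniq Ds ->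
  (forall d, (d \in Ds) = (d %| n)%N) ->
  \prod_(d <- Ds) 'Phi_d = 'X^n - 1.
Proof.
move=> n0 uD memD; rewrite -(prod_Cyclotomic n0); apply: perm_big.
have [uDn _ inDn] := divisors_correct n0.
by apply: uniq_perm => // d; rewrite memD inDn.
Qed.

Lemma dvd_prime p d : prime p -> (d %| p)%N = (d == 1%N) || (d == p).
Proof.
move=> pp; apply/idP/idP.
  by case/primeP: pp => _ H /H.
by case/orP=> /eqP->; rewrite ?dvd1n ?dvdnn.
Qed.

Lemma dvd_pq p q d : prime p -> prime q -> p != q ->
  (d %| p * q)%N = (d \in [:: 1%N; p; q; (p * q)%N]).
Proof.
move=> pp pq npq; rewrite !inE; apply/idP/idP.
  case: (boolP (p %| d)%N) => [/dvdnP [k ->] | npd].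
    rewrite mulnC dvdn_pmul2l ?prime_gt0 // dvd_prime // => /orP[]/eqP->.
      by rewrite muln1 eqxx !orbT.
    by rewrite mulnC eqxx !orbT.
  have cdp : coprime d p by rewrite coprime_sym prime_coprime.
  rewrite Gauss_dvdr // dvd_prime // => /orP[]/eqP->; by rewrite eqxx ?orbT.
case/or4P => /eqP->. all: try by rewrite dvd1n. all: try by rewrite dvdn_mulr. all: try by rewrite dvdn_mull. all: by rewrite dvdnn.
Qed.

Lemma Phi1 : 'Phi_1 = 'X - 1.
Proof.
have H : forall d, (d \in [:: 1%N]) = (d %| 1)%N by move=> d; rewrite inE dvdn1.
have := @prod_Phi_seq 1 [:: 1%N] isT isT H.
by rewrite big_seq1 expr1.
Qed.

Lemma XsubC1_neq0 (R : idomainType) : ('X - 1 : {poly R}) != 0.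
Proof. by rewrite -polyC1 polyXsubC_eq0. Qed.

Lemma Phi_p p : prime p -> 'Phi_p = \sum_(i < p) 'X^i.
Proof.
move=> pp.
have := @prod_Phi_seq p [:: 1%N; p] (prime_gt0 pp).
rewrite /= inE andbT eq_sym neq_ltn prime_gt1 // orbT => /(_ isT).
have H : forall d, (d \in [:: 1%N; p]) = (d %| p)%N by move=> d; rewrite dvd_prime // !inE.
move=> /(_ H); rewrite big_cons big_seq1 Phi1 subrX1.
by move/(mulfI (XsubC1_neq0 _)).
Qed.

Lemma Phi_pq p q : prime p -> prime q -> p != q ->
  'Phi_p * 'Phi_(p * q) = \sum_(i < p) ('X^q) ^+ i.
Proof.
move=> pp pq npq.
have p1 := prime_gt1 pp; have q1 := prime_gt1 pq.
have pq0 : (0 < p * q)%N by rewrite muln_gt0 !prime_gt0.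
have := @prod_Phi_seq (p * q) [:: 1%N; p; q; (p * q)%N] pq0.
have U : uniq [:: 1%N; p; q; (p * q)%N].
  rewrite /= !inE !negb_or -!andbA npq andbT.
  by repeat (apply/andP; split); apply/eqP; nia.
move=> /(_ U (fun d => esym (dvd_pq d pp pq npq))).
rewrite !big_cons big_nil mulr1.
have -> : ('X^(p * q) - 1 : {poly int}) = 'X^q ^+ p - 1 by rewrite mulnC exprM.
rewrite subrX1.
have Hq := @prod_Phi_seq q [:: 1%N; q] (prime_gt0 pq).
rewrite /= inE andbT eq_sym neq_ltn q1 /= in Hq.
have Hd : forall d, (d \in [:: 1%N; q]) = (d %| q)%N by move=> d; rewrite dvd_prime // !inE.
have := Hq (orbT _) Hd.
rewrite big_cons big_seq1 => <-.
rewrite [_ * ('Phi_q * _)]mulrCA !mulrA -[X in X * _ = _]mulrA.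
have nz : 'Phi_1 * 'Phi_q != 0.
  by rewrite mulf_neq0 // monic_neq0 // Cyclotomic_monic.
by rewrite !mulrA -[_ * _ * _ * _]mulrA => /(mulfI nz).
Qed.
Lemma root_prod_has (F : idomainType) (I : Type) (s : seq I) (f : I -> {poly F}) x :
  root (\prod_(i <- s) f i) x -> has (fun i => root (f i) x) s.
Proof.
elim: s => [|i s IH]; first by rewrite big_nil rootE hornerC oner_eq0.
by rewrite big_cons rootM /= => /orP[->//|/IH->]; rewrite orbT.
Qed.

Lemma Phi_root_exp (F : idomainType) d (z : F) : (0 < d)%N ->
  root (map_poly intr 'Phi_d) z -> z ^+ d = 1.
Proof.
move=> d0 r.
have : root (map_poly (intr : int -> F) ('X^d - 1)) z.
  have [uD _ inD] := divisors_correct d0.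
  rewrite -(prod_Cyclotomic d0) (big_rem d) ?inD // rmorphM rootM r //.
by rewrite rmorphB rmorph1 /= map_polyXn rootE !hornerE subr_eq0 => /eqP.
Qed.

Lemma Phi_root (F : idomainType) n (z : F) : n.-primitive_root z ->
  root (map_poly intr 'Phi_n) z.
Proof.
move=> pz; have n0 := prim_order_gt0 pz.
have : root (map_poly (intr : int -> F) ('X^n - 1)) z.
  by rewrite rmorphB rmorph1 /= map_polyXn rootE !hornerE prim_expr_order // subrr.
rewrite -(prod_Cyclotomic n0) rmorph_prod /= => /root_prod_has /hasP [d].
have [uD _ inD] := divisors_correct n0.
rewrite inD => dn rd.
have d0 : (0 < d)%N := dvdn_gt0 n0 dn.
have zd := Phi_root_exp d0 rd.
have nd : (n %| d)%N by rewrite (prim_order_dvd pz) zd.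
have -> : n = d by apply/eqP; rewrite eqn_dvd nd dn.
exact: rd.
Qed.

Lemma map_ratr_int (F : numFieldType) (A : {poly int}) :
  map_poly (ratr : rat -> F) (map_poly intr A) = map_poly intr A.
Proof. by rewrite -map_poly_comp; apply: eq_map_poly => a /=; rewrite ratr_int. Qed.

Lemma Phi_dvd (F : numFieldType) n (z : F) (P : {poly int}) :
  n.-primitive_root z -> root (map_poly intr P) z ->
  exists Q : {poly int}, P = Q * 'Phi_n.
Proof.
move=> pz rP; have n0 := prim_order_gt0 pz.
set Fq := map_poly (intr : int -> rat) 'Phi_n.
set Pq := map_poly (intr : int -> rat) P.
have hF : root (map_poly (ratr : rat -> F) Fq) z by rewrite map_ratr_int Phi_root.
have hP : root (map_poly (ratr : rat -> F) Pq) z by rewrite map_ratr_int.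
have Fq0 : Fq != 0.
  rewrite map_poly_eq0_id0 ?monic_neq0 ?Cyclotomic_monic //.
  by rewrite (monicP (Cyclotomic_monic n)) oner_eq0.
set g := gcdp Pq Fq.
have rg : root (map_poly (ratr : rat -> F) g) z.
  have [[u v] /= Huv] := Bezoutp Pq Fq.
  case/eqpP: Huv => [[c1 c2] /= /andP[c10 c20]] E.
  have := congr1 (fun A => (map_poly (ratr : rat -> F) A).[z]) E.
  rewrite /= !linearZ /= !hornerZ rmorphD !rmorphM /= hornerD !hornerM.
  rewrite (rootP hF) (rootP hP) !mulr0 addr0 mulr0 => /esym/eqP.
  by rewrite mulf_eq0 fmorph_eq0 (negbTE c20).
have g1 : (1 < size g)%N.
  rewrite ltnNge; apply/negP => /size1_polyC gE.
  move: rg; rewrite gE map_polyC rootE hornerC fmorph_eq0 => c0.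
  move: gE; rewrite (eqP c0) => /eqP; rewrite gcdp_eq0 (negbTE Fq0) andbF.
  done.
have [zc hzc] : exists zc : algC, root (map_poly ratr g) zc.
  apply/closed_rootP; rewrite size_map_inj_poly; first by rewrite gtn_eqF.
    exact: fmorph_inj.
  by rewrite rmorph0.
have gF : (g %| Fq) := dvdp_gcdr _ _.
have gP : (g %| Pq) := dvdp_gcdl _ _.
have rootdiv : forall A, (g %| A) -> root (map_poly (ratr : rat -> algC) A) zc.
  move=> A /dvdpP [r ->]; by rewrite rmorphM rootM hzc orbT.
have FqC : map_poly (ratr : rat -> algC) Fq = map_poly intr 'Phi_n.
  by rewrite map_ratr_int.
have pzc : n.-primitive_root zc.
  have [z0 pz0] := C_prim_root_exists n0.
  rewrite -(root_cyclotomic pz0) -(Cintr_Cyclotomic pz0) -FqC.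
  exact: rootdiv.
have [p0 [Dp0 _] Hdiv] := minCpolyP zc.
have p0E : p0 = Fq.
  apply: (map_inj_poly (fmorph_inj (ratr : {rmorphism rat -> algC}))); first exact: rmorph0.
  rewrite -Dp0.
  by rewrite FqC (minCpoly_cyclotomic pzc) (Cintr_Cyclotomic pzc).
have FP : (Fq %| Pq) by rewrite -p0E -Hdiv rootdiv.
have mPhi := Cyclotomic_monic n.
exists (Pdiv.Ring.rdivp P 'Phi_n).
have E := Pdiv.RingMonic.rdivp_eq mPhi P.
set Rm := Pdiv.CommonRing.rmodp P 'Phi_n in E.
suff Rm0 : Rm = 0 by rewrite {1}E Rm0 addr0.
have szR : (size Rm < size 'Phi_n)%N.
  by rewrite Pdiv.CommonRing.ltn_rmodpN0 // monic_neq0.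
apply/eqP; apply/negPn/negP => R0.
have : (Fq %| map_poly (intr : int -> rat) Rm).
  have -> : map_poly (intr : int -> rat) Rm = Pq - map_poly intr (Pdiv.CommonRing.rdivp P 'Phi_n) * Fq.
    by rewrite /Pq {1}E rmorphD rmorphM /= addrC addKr.
  by rewrite dvdp_sub ?dvdp_mull.
have mR0 : map_poly (intr : int -> rat) Rm != 0.
  by rewrite map_poly_eq0_id0 // intr_eq0 lead_coef_eq0.
move/(dvdp_leq mR0).
rewrite !size_map_inj_poly //; try exact: intr_inj.
  by rewrite leqNgt szR.
Qed.
Definition Msum (K : nzRingType) (p N r : nat) (F : {poly K}) : K :=
  \sum_(e < N) ((e %% p)%N == r)%:R * F`_e.

Lemma Msum_widen (K : nzRingType) p N1 N2 r (F : {poly K}) :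
  (size F <= N1)%N -> (N1 <= N2)%N -> Msum p N2 r F = Msum p N1 r F.
Proof.
move=> s1 n12; rewrite /Msum -(subnKC n12) big_split_ord /=.
rewrite [X in _ + X]big1 ?addr0 // => i _.
by rewrite nth_default ?mulr0 // (leq_trans s1) // leq_addr.
Qed.

Lemma MsumB (K : nzRingType) p N r (F G : {poly K}) :
  Msum p N r (F - G) = Msum p N r F - Msum p N r G.
Proof.
by rewrite /Msum -sumrB; apply: eq_bigr => e _; rewrite coefB mulrBr.
Qed.

Lemma MsumZ (K : comNzRingType) p N r c (F : {poly K}) :
  Msum p N r (c *: F) = c * Msum p N r F.
Proof.
by rewrite /Msum mulr_sumr; apply: eq_bigr => e _; rewrite coefZ mulrCA.
Qed.

Lemma Msum0 (K : nzRingType) p N r : Msum p N r (0 : {poly K}) = 0.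
Proof. by rewrite /Msum big1 // => e _; rewrite coef0 mulr0. Qed.

Lemma Msum_mulXn (K : nzRingType) p N r (W : {poly K}) :
  (size W + p <= N)%N -> Msum p N r (W * 'X^p) = Msum p N r W.
Proof.
move=> sN.
have pN : (p <= N)%N by rewrite (leq_trans _ sN) ?leq_addl.
rewrite [RHS](@Msum_widen _ p (N - p)%N N) ?leq_subr //; last by rewrite leq_subRL // addnC.
move: (N - p)%N (subnKC pN) => M E; rewrite /Msum; subst N.
rewrite big_split_ord /= big1 ?add0r => [|i _]; last first.
  by rewrite coefMXn /= ltn_ord mulr0.
apply: eq_bigr => i _; rewrite coefMXn ltnNge leq_addr /= addKn modnDl //.
Qed.

Lemma Msum_XpB1 (K : idomainType) p N r (W : {poly K}) : (0 < p)%N ->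
  (size (W * ('X^p - 1))%R <= N)%N -> Msum p N r (W * ('X^p - 1)) = 0.
Proof.
move=> p0 sN; have [->|W0] := eqVneq W 0; first by rewrite mul0r Msum0.
have sW : (size W + p <= N)%N.
  move: sN; rewrite size_mul ?size_XnsubC // -?size_poly_eq0 ?size_XnsubC //.
  by rewrite addnS.
by rewrite mulrBr mulr1 MsumB Msum_mulXn // subrr.
Qed.

Definition Jp (K : nzRingType) (p : nat) : {poly K} := \sum_(i < p) 'X^i.

Lemma coef_Jp (K : nzRingType) p e : (Jp K p)`_e = (e < p)%:R.
Proof.
rewrite /Jp coef_sum.
case: (ltnP e p) => ep.
  rewrite (bigD1 (Ordinal ep)) //= coefXn eqxx big1 ?addr0 // => i ie.
  by rewrite coefXn; case: eqP => // E; case/eqP: ie; apply: val_inj; rewrite /= E.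
by rewrite big1 // => i _; rewrite coefXn; case: eqP => // E; move: (ltn_ord i); rewrite -E ltnNge ep.
Qed.

Lemma Msum_Jp (K : nzRingType) p N r : (r < p)%N -> (p <= N)%N -> Msum p N r (Jp K p) = 1.
Proof.
move=> rp pN; rewrite /Msum (bigD1 (Ordinal (leq_trans rp pN))) //=.
rewrite coef_Jp rp modn_small // eqxx mulr1 big1 ?addr0 // => i ir.
rewrite coef_Jp; case: (ltnP i p) => ip; last by rewrite mulr0.
rewrite modn_small //; case: eqP => E; last by rewrite mul0r.
by case/eqP: ir; apply: val_inj; rewrite /= E.
Qed.

Lemma size_Jp (K : nzRingType) p : (size (Jp K p) <= p)%N.
Proof.
rewrite /Jp; apply: (leq_trans (size_sum _ _ _)).
apply/bigmax_leqP => i _; rewrite size_polyXn; exact: ltn_ord.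
Qed.
Lemma frob_sum (R : comNzRingType) q (ch : q \in [pchar R]) n (f : nat -> R) :
  (\sum_(i < n) f i) ^+ q = \sum_(i < n) (f i) ^+ q.
Proof.
have pq := pcharf_prime ch.
have pn : [pchar R].-nat q by rewrite /pnat prime_gt0 //= primes_prime //= andbT.
elim: n => [|n IH]; first by rewrite !big_ord0 expr0n gtn_eqF ?prime_gt0.
by rewrite !big_ord_recr /= exprDn_pchar // IH.
Qed.

Lemma size_map_le (aR rR : nzRingType) (f : aR -> rR) (p : {poly aR}) :
  (size (map_poly f p) <= size p)%N.
Proof. by rewrite map_polyE; apply: (leq_trans (size_Poly _)); rewrite size_map. Qed.

Lemma alg_main p q (P Q : {poly int}) : prime p -> prime q -> p != q ->
  P = Q * 'Phi_(p * q) ->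
  exists c : 'F_q, forall r N, (r < p)%N -> (size P + p <= N)%N ->
     Msum p N r (map_poly intr P : {poly 'F_q}) = c.
Proof.
move=> pp pq npq hP.
pose phi := map_poly (intr : int -> 'F_q).
have chK : q \in [pchar {poly 'F_q}] by rewrite pchar_poly pchar_Fp.
set J := Jp 'F_q p.
have Jq : J ^+ q = \sum_(i < p) ('X^q) ^+ i.
  rewrite /J /Jp (frob_sum chK p (fun i : nat => ('X^i : {poly 'F_q}))); apply: eq_bigr => i _.
  by rewrite -!exprM mulnC.
have phiP : phi 'Phi_p = J.
  by rewrite /phi Phi_p // rmorph_sum; apply: eq_bigr => i _; rewrite rmorphXn /= map_polyX.
have E1 : J * phi 'Phi_(p * q) = J ^+ q.
  rewrite Jq -phiP /phi -rmorphM Phi_pq // rmorph_sum; apply: eq_bigr => i _.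
  by rewrite -!exprM /= map_polyXn.
have J0 : J != 0.
  apply/eqP => J0; have := coef_Jp 'F_q p 0; rewrite -/J J0 coef0 prime_gt0 //.
have qq : q = (q.-2).+2 by move: (prime_gt1 pq); clear; case: q => [|[|q']].
have E2 : phi 'Phi_(p * q) = J ^+ q.-1.
  by apply: (mulfI J0); rewrite E1 -exprS prednK // prime_gt0.
set H := phi Q * J ^+ (q.-2).
have PH : phi P = J * H.
  rewrite hP /phi rmorphM /= -/phi E2 /H mulrCA -exprS.
  by congr (_ * (J ^+ _)); rewrite {1}qq.
exists H.[1] => r N rp sN.
have [W HW] : exists W, H - (H.[1])%:P = W * ('X - 1%:P).
  by apply/factor_theorem; rewrite rootE !hornerE subrr.
have D : phi P - H.[1] *: J = W * ('X^p - 1).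
  rewrite PH -mul_polyC [_ * J]mulrC -mulrBr HW subrX1 polyC1.
  by rewrite mulrCA; congr (_ * _); rewrite mulrC.
have sD : (size (W * ('X^p - 1))%R <= N)%N.
  rewrite -D (leq_trans (size_polyD _ _)) // geq_max; apply/andP; split.
    by rewrite (leq_trans (size_map_le _ _)) // (leq_trans _ sN) // leq_addr.
  rewrite size_polyN (leq_trans (size_scale_leq _ _)) // (leq_trans (size_Jp _ _)) //.
  by rewrite (leq_trans _ sN) // leq_addl.
have := Msum_XpB1 r (prime_gt0 pp) sD; rewrite -D MsumB MsumZ Msum_Jp //; last first.
  by rewrite (leq_trans _ sN) // leq_addl.
by move/eqP; rewrite mulr1 subr_eq0 => /eqP.
Qed.
Section Analytic.
Variable R : realType.

Lemma expiD (a b : R) : expi (a + b) = expi a * expi b.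
Proof. by rewrite /expi cosD sinD [RHS]/GRing.mul /= [_ * sin b + _]addrC. Qed.

Lemma expi0 : expi (0 : R) = 1.
Proof. by rewrite /expi cos0 sin0. Qed.

Lemma expiX (t : R) n : expi (n%:R * t) = expi t ^+ n.
Proof.
elim: n => [|n IH]; first by rewrite mul0r expi0 expr0.
by rewrite -addn1 natrD mulrDl mul1r expiD IH addn1 exprSr.
Qed.

Lemma expi2pi : expi (2 * pi : R) = 1.
Proof. by rewrite /expi mulr_natl cos2pi sin2pi. Qed.

Lemma expi_neq1 (n : nat) : (1 < n)%N -> expi (2 * pi / n%:R : R) != 1.
Proof.
move=> n1; apply/negP => /eqP E.
have := congr1 (@complex.Re R) E; rewrite /expi /= => C1.
have n0 : (0 : R) < n%:R by rewrite ltr0n (ltn_trans _ n1).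
set y : R := pi / n%:R.
have Ey : 2 * pi / n%:R = y + y by rewrite /y; field; rewrite lt0r_neq0.
have ys : 0 < sin y.
  apply: sin_gt0_pi; rewrite /y divr_gt0 ?pi_gt0 //= ltr_pdivrMr //.
  by rewrite ltr_pMr ?pi_gt0 // ltr1n.
move: C1; rewrite Ey cosD.
have := cos2Dsin2 y => H; move=> C1.
have : sin y ^+ 2 = 0 by rewrite -!expr2 in C1; nra.
by move/eqP; rewrite sqrf_eq0 => /eqP sy; by move: ys; rewrite sy lt0r eqxx.
Qed.
End Analytic.
Section Zeta.
Variable R : realType.

Definition zeta (p q : nat) : R[i] := expi (2 * pi / (p * q)%N%:R).

Lemma zetaX p q k : zeta p q ^+ k = expi (k%:R * (2 * pi / (p * q)%N%:R) : R).
Proof. by rewrite expiX. Qed.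

Lemma zeta_prim p q : prime p -> prime q -> p != q -> (p * q).-primitive_root (zeta p q).
Proof.
move=> pp pq npq.
have p0 : (p%:R : R) != 0 by rewrite pnatr_eq0 -lt0n prime_gt0.
have q0 : (q%:R : R) != 0 by rewrite pnatr_eq0 -lt0n prime_gt0.
have pq0 : (0 < p * q)%N by rewrite muln_gt0 !prime_gt0.
have zpq : zeta p q ^+ (p * q) = 1.
  rewrite zetaX natrM -expi2pi; congr expi; field; by rewrite p0 q0.
have zp : zeta p q ^+ p != 1.
  rewrite zetaX natrM; have -> : p%:R * (2 * pi / (p%:R * q%:R)) = 2 * pi / q%:R :> R.
    by field; rewrite p0 q0.
  exact: expi_neq1 (prime_gt1 pq).
have zq : zeta p q ^+ q != 1.
  rewrite zetaX natrM; have -> : q%:R * (2 * pi / (p%:R * q%:R)) = 2 * pi / p%:R :> R.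
    by field; rewrite p0 q0.
  exact: expi_neq1 (prime_gt1 pp).
have [m pm] := prim_order_exists pq0 zpq.
rewrite dvd_pq // !inE => /or4P [] /eqP mE; subst m.
- have := prim_expr_order pm; rewrite expr1 => z1.
  by move: zp; rewrite z1 expr1n eqxx.
- by move: zp; rewrite (prim_expr_order pm) eqxx.
- by move: zq; rewrite (prim_expr_order pm) eqxx.
- exact: pm.
Qed.

Lemma chi_zeta p q (w s : G p q) : prime p -> prime q ->
  chi R w s = zeta p q ^+ (q * dot2 w.1 s.1 + p * dot2 w.2 s.2)%N.
Proof.
move=> pp pq.
have p0 : (p%:R : R) != 0 by rewrite pnatr_eq0 -lt0n prime_gt0.
have q0 : (q%:R : R) != 0 by rewrite pnatr_eq0 -lt0n prime_gt0.
rewrite zetaX /chi; congr expi; rewrite natrD !natrM; field; by rewrite p0 q0.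
Qed.
End Zeta.
Section Comb.
Variables (p : nat) (K : fieldType).
Hypothesis pp : prime p.
Hypothesis p0 : (p%:R : K) != 0.

Definition dz (u a : Z2 p) : 'Z_p := u.1 * a.1 + u.2 * a.2.

Lemma card_Zp_prime : #|{: 'Z_p}| = p.
Proof. by rewrite card_ord Zp_cast ?prime_gt1. Qed.

Lemma unit_Zp (x : 'Z_p) : x != 0 -> x \is a GRing.unit.
Proof.
move=> x0; rewrite -(natr_Zp x) unitZpE ?prime_gt1 // prime_coprime //.
have xp : (nat_of_ord x < p)%N.
  by apply: (leq_trans (ltn_ord x)); rewrite Zp_cast ?prime_gt1.
rewrite gtnNdvd //.
by rewrite lt0n; apply: contra x0 => /eqP h; apply/eqP/val_inj.
Qed.

Lemma one_Zp_neq0 : (1 : 'Z_p) != 0.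
Proof. exact: oner_neq0. Qed.

Variable f : Z2 p -> K.

Lemma line_sum (u : Z2 p) (c : K) :
  (forall t, \sum_(a | dz u a == t) f a = c) -> p%:R * c = \sum_a f a.
Proof.
move=> H; rewrite (partition_big (fun a => dz u a) predT) //=.
rewrite (eq_bigr (fun _ => c)) => [|t _]; last by rewrite -(H t).
by rewrite sumr_const card_Zp_prime mulr_natl.
Qed.

Lemma sum_ind (P : pred (Z2 p)) : \sum_(a | P a) f a = \sum_a (P a)%:R * f a.
Proof.
by rewrite big_mkcond; apply: eq_bigr => a _; case: (P a); rewrite ?mul1r ?mul0r.
Qed.

Lemma count_unit (d c : 'Z_p) : d \is a GRing.unit ->
  \sum_(m : 'Z_p) ((m * d == c)%:R : K) = 1.
Proof.
move=> du; rewrite (bigD1 (c / d)) //= divrK // eqxx big1 ?addr0 // => m mE.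
case: eqP => // E; case/eqP: mE; by rewrite -E mulrK.
Qed.

Lemma weight (x y : Z2 p) :
  \sum_(m : 'Z_p) ((dz (1, m) x == dz (1, m) y)%:R : K) + (dz (0, 1) x == dz (0, 1) y)%:R
  = 1 + p%:R * (x == y)%:R.
Proof.
rewrite /dz /= !mul0r !mul1r !add0r.
case: x y => [x1 x2] [y1 y2] /=; rewrite xpair_eqE.
case: (eqVneq x2 y2) => [<-|E2].
  rewrite andbT /= addrC; congr (_ + _).
  rewrite (eq_bigr (fun _ => ((x1 == y1)%:R : K))) => [|m _]; last first.
    by rewrite (inj_eq (addIr _)).
  by rewrite sumr_const card_Zp_prime mulr_natl.
rewrite andbF /= mulr0 !addr0.
have cu := @count_unit (x2 - y2) (y1 - x1).
rewrite -[RHS]cu; last by rewrite unit_Zp // subr_eq0.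
apply: eq_bigr => m _.
have -> : (x1 + m * x2 == y1 + m * y2) = (m * (x2 - y2) == y1 - x1); last by [].
apply/eqP/eqP => E.
  by transitivity ((y1 + m * y2) - x1 - m * y2); [rewrite -E; ring | ring].
by transitivity (x1 + m * (x2 - y2) + m * y2); [ring | rewrite E; ring].
Qed.

Lemma comb :
  (forall u : Z2 p, u != (0, 0) -> exists c, forall t : 'Z_p, \sum_(a | dz u a == t) f a = c) ->
  forall a b, f a = f b.
Proof.
move=> H.
set T := \sum_a f a.
have lineT : forall u, u != (0, 0) -> forall t, \sum_(a | dz u a == t) f a = T / p%:R.
  move=> u /H [c Hc] t; rewrite Hc; apply: (mulfI p0).
  by rewrite (line_sum Hc) mulrC divfK.
have key : forall a, T + p%:R * f a = (p%:R + 1) * (T / p%:R).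
  move=> a.
  have d1 : forall m : 'Z_p, ((1, m) : Z2 p) != (0, 0).
    by move=> m; rewrite xpair_eqE negb_and one_Zp_neq0.
  have d2 : ((0, 1) : Z2 p) != (0, 0) by rewrite xpair_eqE negb_and one_Zp_neq0 orbT.
  transitivity (\sum_(m : 'Z_p) \sum_(a' | dz (1, m) a' == dz (1, m) a) f a'
                + \sum_(a' | dz (0, 1) a' == dz (0, 1) a) f a'); last first.
    have E : \sum_(m : 'Z_p) \sum_(a' | dz (1, m) a' == dz (1, m) a) f a'
             = \sum_(m : 'Z_p) T / p%:R by apply: eq_bigr => m _; exact: lineT.
    rewrite E lineT //.
    by rewrite sumr_const card_Zp_prime mulrDl mul1r mulr_natl.
  transitivity (\sum_a' (1 + p%:R * (a' == a)%:R) * f a'); last first.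
    rewrite (eq_bigr (fun a' => \sum_(m : 'Z_p) ((dz (1,m) a' == dz (1,m) a)%:R * f a')
                 + (dz (0,1) a' == dz (0,1) a)%:R * f a')); last first.
      by move=> a' _; rewrite -weight mulrDl mulr_suml.
    rewrite big_split /= exchange_big /=; apply: f_equal2.
      by apply: eq_bigr => m _; rewrite sum_ind.
    by rewrite sum_ind.
  rewrite (bigD1 a) //= eqxx mulr1 /T (bigD1 a) //= -addrA addrC -!addrA.
  rewrite addrC; apply: f_equal2; first by rewrite mulrDl mul1r addrC.
  by apply: eq_bigr => i /negbTE ->; rewrite mulr0 addr0 mul1r.
move=> a b; apply: (mulfI p0); apply: (addrI T); by rewrite !key.
Qed.
End Comb.
Lemma valZpM p (x y : 'Z_p) : (1 < p)%N ->
  nat_of_ord (x * y) = ((nat_of_ord x * nat_of_ord y) %% p)%N.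
Proof. by move=> p1 /=; congr (_ %% _)%N; apply: Zp_cast. Qed.

Lemma valZpD p (x y : 'Z_p) : (1 < p)%N ->
  nat_of_ord (x + y) = ((nat_of_ord x + nat_of_ord y) %% p)%N.
Proof. by move=> p1 /=; congr (_ %% _)%N; apply: Zp_cast. Qed.

Lemma val_dz p (u a : Z2 p) : (1 < p)%N ->
  nat_of_ord (dz u a) = (dot2 u a %% p)%N.
Proof.
move=> p1; rewrite /dz /dot2 valZpD // !valZpM //.
by rewrite modnDm.
Qed.

Lemma e_mod p q (u x : Z2 p) (y : Z2 q) (b : Z2 q) (a : Z2 p) : (1 < p)%N ->
  ((q * dot2 u a + p * dot2 y b) %% p)%N = nat_of_ord ((q%:R : 'Z_p) * dz u a).
Proof.
move=> p1; rewrite valZpM // val_Zp_nat // val_dz // modnMm.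
by rewrite addnC mulnC modnMDl.
Qed.

Lemma split_S (K : nzRingType) p q (S : {set G p q}) (g : Z2 p -> K) :
  \sum_(s in S) g s.1 = \sum_a (Sp S a)%:R * g a.
Proof.
transitivity (\sum_a \sum_b (if (a, b) \in S then g a else 0)).
  rewrite pair_bigA [RHS](eq_bigr (fun s : G p q => if s \in S then g s.1 else 0)).
    by rewrite [LHS]big_mkcond.
  by move=> [a b].
rewrite [RHS](eq_bigr (fun a => \sum_b (if (a, b) \in S then g a else 0))) // => a _.
rewrite /Sp -sum1_card natr_sum mulr_suml big_mkcond /=.
by apply: eq_bigr => b _; rewrite inE; case: ((a, b) \in S); rewrite ?mul1r ?mul0r.
Qed.

Lemma Msum_P (K : nzRingType) (T : finType) p N r (S : {pred T}) (e : T -> nat) :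
  (forall s, s \in S -> (e s < N)%N) ->
  Msum p N r (map_poly intr (\sum_(s in S) 'X^(e s)) : {poly K})
  = \sum_(s in S) (((e s %% p)%N == r)%:R : K).
Proof.
move=> eN; rewrite rmorph_sum /Msum.
rewrite (eq_bigr (fun k : 'I_N => \sum_(s in S) ((k %% p)%N == r)%:R * ((k : nat) == e s)%:R)); last first.
  move=> k _; rewrite coef_sum mulr_sumr; apply: eq_bigr => s _.
  by rewrite coef_map /= coefXn rmorph_nat.
rewrite exchange_big /=; apply: eq_bigr => s sS.
rewrite (bigD1 (Ordinal (eN s sS))) //= eqxx mulr1 big1 ?addr0 // => k ks.
have [E|E] := eqVneq (nat_of_ord k) (e s); last by rewrite mulr0n mulr0.
by case/eqP: ks; apply: val_inj; rewrite /= E.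
Qed.
Theorem proposition4p7 (R : realType) (p q : nat) (hp : prime p) (hq : prime q)
    (hpq : p != q) (S : {set G p q}) :
  (forall u : Z2 p, u != (0, 0) ->
     exists x_u : Z2 q, chiS R (u, x_u) S = 0) ->
  exists (c : nat) (D : {ffun Z2 p -> nat}),
    forall a : Z2 p, Sp S a = (c + q * D a)%N.
Proof.
move=> Hyp.
have p1 := prime_gt1 hp; have q1 := prime_gt1 hq.
pose f (a : Z2 p) : 'F_q := (Sp S a)%:R.
have chq : q \in [pchar 'F_q] := pchar_Fp hq.
have p0 : (p%:R : 'F_q) != 0 by rewrite -(dvdn_pcharf chq) dvdn_prime2 // eq_sym.
have qunit : (q%:R : 'Z_p) \is a GRing.unit.
  by rewrite unitZpE // prime_coprime // dvdn_prime2.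
have lines : forall u : Z2 p, u != (0, 0) ->
    exists c, forall t : 'Z_p, \sum_(a | dz u a == t) f a = c.
  move=> u /Hyp [x hx].
  pose e (s : G p q) := (q * dot2 u s.1 + p * dot2 x s.2)%N.
  pose P : {poly int} := \sum_(s in S) 'X^(e s).
  have rP : root (map_poly intr P) (zeta R p q).
    apply/eqP; rewrite -hx /chiS rmorph_sum horner_sum; apply: eq_bigr => s _.
    by rewrite /= map_polyXn hornerXn (@chi_zeta R p q (u, x) s hp hq).
  have [Q hQ] := Phi_dvd (zeta_prim R hp hq hpq) rP.
  have [c Hc] := alg_main hp hq hpq hQ.
  exists c => t.
  set N := (size P + p + \sum_(s in S) (e s).+1)%N.
  have eN : forall s, s \in S -> (e s < N)%N.
    move=> s sS; rewrite /N (bigD1 s) //=; lia.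
  have r_lt : (nat_of_ord ((q%:R : 'Z_p) * t)%R < p)%N.
    by apply: (leq_trans (ltn_ord _)); rewrite Zp_cast.
  rewrite -(Hc _ N r_lt); last by rewrite /N leq_addr.
  rewrite Msum_P // sum_ind.
  rewrite (eq_bigr (fun s : G p q => ((dz u s.1 == t)%:R : 'F_q))); last first.
    move=> s _; rewrite /e e_mod //.
    by rewrite (inj_eq val_inj) (inj_eq (mulrI qunit)).
  rewrite (split_S S (fun a => ((dz u a == t)%:R : 'F_q))).
  by apply: eq_bigr => a _; rewrite mulrC.
have fc := @comb p 'F_q hp p0 f lines.
pose z0 : Z2 p := (0, 0).
exists (Sp S z0 %% q)%N, [ffun a => (Sp S a %/ q)%N] => a.
rewrite ffunE.
have E : (Sp S a %% q)%N = (Sp S z0 %% q)%N.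
  have := fc a z0; rewrite /f.
  by move=> /(congr1 (fun x : 'F_q => nat_of_ord x)); rewrite /= !val_Fp_nat.
by rewrite {1}(divn_eq (Sp S a) q) E addnC mulnC.
Qed.
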